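(* Let $n,p\ge1$ be integers and let $\mathbf{A}^{p+1}_{n+1}$ be as defined in the context. Then $\mathbf{A}^{p+1}_{n+1}$ is local: it has a unique maximal proper implicative filter, namely ${\uparrow}\langle(0,0),p\rangle=\{a\in A:a\ge\langle(0,0),p\rangle\}$; consequently $\mathrm{Rad}(\mathbf{A}^{p+1}_{n+1})={\uparrow}\langle(0,0),p\rangle$.
   Context: Order $\mathbb{Z}\times\mathbb{Z}$ lexicographically: $(m,r)\preccurlyeq(k,s)$ iff $m<k$, or $m=k$ and $r\le s$; addition/subtraction of pairs is componentwise, and $\min,\max$ of pairs refer to $\preccurlyeq$. For an integer $n\ge1$ let $L^\omega_{n+1}=\{(m,r)\in\mathbb{Z}^2:(0,0)\preccurlyeq(m,r)\preccurlyeq(n,0)\}$ with $x\ast y=\max\{(0,0),x+y-(n,0)\}$ and $x\to y=\min\{(n,0),(n,0)-x+y\}$. For an integer $p\ge1$ let $L_{p+1}=\{0,1,\dots,p\}$ with $\alpha\ast\beta=\max\{0,\alpha+\beta-p\}$. Define $$A=A^{p+1}_{n+1}=\{\langle(m,r),\alpha\rangle:(m,r)\in L^\omega_{n+1},\ \alpha\in\{0,p\}\}\cup\{\langle(m,r),\alpha\rangle:(0,0)\preccurlyeq(m,r)\preccurlyeq(n-1,0),\ 0<\alpha<p\}.$$ Order: $\langle(m,r),\alpha\rangle\le\langle(k,s),\beta\rangle$ iff one of: (o1) $\alpha\neq0$, $\alpha\le\beta$ and $(m,r)\preccurlyeq(k,s)$; (o2) $\alpha=\beta=0$ and $(k,s)\preccurlyeq(m,r)$;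 (o3) $\alpha=0$, $\beta\ne0$ and $(n-1,0)\preccurlyeq(m+k,r+s)$. $\wedge,\vee$ denote meet and join for $\le$. Put $\bot=\langle(n,0),0\rangle$, $\top=\langle(n,0),p\rangle$. For $a=\langle(m,r),\alpha\rangle$, $b=\langle(k,s),\beta\rangle\in A$ define $a\odot b$ by: (P1) if $\alpha,\beta\ge1$ and $\alpha+\beta>p$: $a\odot b=\langle(m,r)\ast(k,s),\alpha+\beta-p\rangle$; (P2) if $\alpha,\beta\ge1$ and $\alpha+\beta\le p$: $a\odot b=\langle\min\{(n,0),(2n-(m+k+1),-(r+s))\},0\rangle$; (P3) if $\alpha\ge1$, $\beta=0$: $a\odot b=\langle(m,r)\to(k,s),0\rangle$, and if $\alpha=0$, $\beta\ge1$: $a\odot b=\langle(k,s)\to(m,r),0\rangle$; (P4) if $\alpha=\beta=0$: $a\odot b=\langle\min\{(n,0),(m+k+1,r+s)\},0\rangle$. Define $\sim\langle(m,r),\alpha\rangle=\langle(m,r),p-\alpha\rangle$ if $\alpha\in\{0,p\}$, and $\sim\langle(m,r),\alpha\rangle=\langle(n-1-m,-r),p-\alpha\rangle$ if $0<\alpha<p$. Define $a\Rightarrow b=\sim(a\odot\sim b)$. The algebra $\mathbf{A}^{p+1}_{n+1}$ is $\langle A;\odot,\Rightarrow,\wedge,\vee,\bot,\top\rangle$. An implicative filter is a subset $F\subseteq A$ with $\top\in F$, closed under $\odot$, and upward closed w.r.t. $\le$; it is proper if $F\ne A$. $\mathrm{Rad}(\mathbf{A}^{p+1}_{n+1})$ is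 the intersection of all maximal proper implicative filters. *)

(* Defs.v *)
From Stdlib Require Import ZArith Bool.
Open Scope bool_scope.
Open Scope Z_scope.

Definition lex_le (x y : Z * Z) : Prop :=
  fst x < fst y \/ (fst x = fst y /\ snd x <= snd y).

Definition lex_leb (x y : Z * Z) : bool :=
  (fst x <? fst y) || ((fst x =? fst y) && (snd x <=? snd y)).

Definition lex_min (x y : Z * Z) : Z * Z := if lex_leb x y then x else y.
Definition lex_max (x y : Z * Z) : Z * Z := if lex_leb x y then y else x.

Definition padd (x y : Z * Z) : Z * Z := (fst x + fst y, snd x + snd y).
Definition psub (x y : Z * Z) : Z * Z := (fst x - fst y, snd x - snd y).

(* The MV-like operations on L^omega_{n+1}. *)
Definition lstar (n : Z) (x y : Z * Z) : Z * Z :=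
  lex_max (0, 0) (psub (padd x y) (n, 0)).
Definition larrow (n : Z) (x y : Z * Z) : Z * Z :=
  lex_min (n, 0) (padd (psub (n, 0) x) y).

(* An element <(m,r),alpha> is encoded as ((m,r), alpha). *)
Definition elt := ((Z * Z) * Z)%type.

Definition inA (n p : Z) (a : elt) : Prop :=
  let (x, al) := a in
  (lex_le (0, 0) x /\ lex_le x (n, 0) /\ (al = 0 \/ al = p)) \/
  (lex_le (0, 0) x /\ lex_le x (n - 1, 0) /\ 0 < al < p).

Definition leA (n : Z) (a b : elt) : Prop :=
  let (x, al) := a in let (y, be) := b in
  (al <> 0 /\ al <= be /\ lex_le x y) \/
  (al = 0 /\ be = 0 /\ lex_le y x) \/
  (al = 0 /\ be <> 0 /\ lex_le (n - 1, 0) (padd x y)).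

Definition botA (n : Z) : elt := ((n, 0), 0).
Definition topA (n p : Z) : elt := ((n, 0), p).

(* The product (P1)-(P4). *)
Definition odot (n p : Z) (a b : elt) : elt :=
  let (x, al) := a in let (y, be) := b in
  if (1 <=? al) && (1 <=? be) then
    if p <? al + be then (lstar n x y, al + be - p)
    else (lex_min (n, 0) (2 * n - (fst x + fst y + 1), - (snd x + snd y)), 0)
  else if (1 <=? al) then (larrow n x y, 0)
  else if (1 <=? be) then (larrow n y x, 0)
  else (lex_min (n, 0) (fst x + fst y + 1, snd x + snd y), 0).

Definition simA (n p : Z) (a : elt) : elt :=
  let (x, al) := a in
  if (al =? 0) || (al =? p) then (x, p - al)
  else ((n - 1 - fst x, - snd x), p - al).

Definition implA (n p : Z) (a b : elt) : elt :=
  simA n p (odot n p a (simA n p b)).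

Definition implicative_filter (n p : Z) (F : elt -> Prop) : Prop :=
  (forall a, F a -> inA n p a) /\
  F (topA n p) /\
  (forall a b, F a -> F b -> F (odot n p a b)) /\
  (forall a b, F a -> inA n p b -> leA n a b -> F b).

Definition proper_filter (n p : Z) (F : elt -> Prop) : Prop :=
  implicative_filter n p F /\ exists a, inA n p a /\ ~ F a.

Definition maximal_filter (n p : Z) (F : elt -> Prop) : Prop :=
  proper_filter n p F /\
  forall G, proper_filter n p G -> (forall a, F a -> G a) -> forall a, G a -> F a.

Definition upset (n p : Z) (c : elt) : elt -> Prop :=
  fun a => inA n p a /\ leA n c a.

Definition Rad (n p : Z) : elt -> Prop :=
  fun a => inA n p a /\ forall F, maximal_filter n p F -> F a.

(* Main.v *)
Require Import Defs.
From Stdlib Require Import ZArith.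
From Stdlib Require Import Lia Bool.
Open Scope Z_scope.

Lemma lex_leb_iff x y : lex_leb x y = true <-> lex_le x y.
Proof.
  destruct x as [a b], y as [c d]; unfold lex_leb, lex_le; simpl.
  rewrite orb_true_iff, andb_true_iff, Z.ltb_lt, Z.eqb_eq, Z.leb_le; tauto.
Qed.

Lemma lex_leb_false x y : lex_leb x y = false -> ~ lex_le x y.
Proof. intros H H'; apply lex_leb_iff in H'; congruence. Qed.

Ltac zb :=
  repeat match goal with
  | H : (_ <=? _) = true |- _ => apply Z.leb_le in H
  | H : (_ <=? _) = false |- _ => apply Z.leb_gt in H
  | H : (_ <? _) = true |- _ => apply Z.ltb_lt in H
  | H : (_ <? _) = false |- _ => apply Z.ltb_ge in H
  end.

Section S.
Variables n p : Z.
Hypothesis hn : 1 <= n.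
Hypothesis hp : 1 <= p.

Lemma bot_le b : inA n p b -> leA n (botA n) b.
Proof.
  destruct b as [[m r] be]; unfold inA, leA, botA, lex_le, padd; simpl; intros H.
  destruct (Z.eq_dec be 0).
  - right; left; lia.
  - right; right; lia.
Qed.

Lemma bot_in : inA n p (botA n).
Proof. unfold inA, botA, lex_le; simpl; left; lia. Qed.

Lemma alpha0 F : implicative_filter n p F -> forall m r, F ((m,r),0) -> F (botA n).
Proof.
  intros [HA [Ht [Hm Hu]]] m r Ha.
  assert (Hia := HA _ Ha). unfold inA, lex_le in Hia; simpl in Hia.
  assert (Hm0 : 0 <= m) by lia.
  assert (Inv : forall k : nat, exists b, F b /\
     (b = botA n \/ exists m' r', b = ((m',r'),0) /\ Z.of_nat k <= m')).
  { induction k as [|k IH].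
    - exists ((m,r),0); split; auto. right; exists m, r; split; auto; lia.
    - destruct IH as [b [Fb [Hb|[m' [r' [Hb Hk]]]]]]; subst b.
      + exists (botA n); split; auto.
      + exists (odot n p ((m',r'),0) ((m,r),0)); split; [apply Hm; auto|].
        unfold odot, lex_min; simpl.
        destruct (lex_leb (n,0) (m'+m+1, r'+r)); [left; reflexivity|].
        right; eexists; eexists; split; [reflexivity|]; lia. }
  destruct (Inv (Z.to_nat (n+1))) as [b [Fb [Hb|[m' [r' [Hb Hk]]]]]]; subst; auto.
  exfalso. assert (Hi := HA _ Fb). unfold inA, lex_le in Hi; simpl in Hi. lia.
Qed.

Lemma alphamid F : implicative_filter n p F -> forall x al, F (x,al) -> 0 < al < p ->
  exists m' r', F ((m',r'),0).
Proof.
  intros HF x al Ha Hal. destruct HF as [HA [Ht [Hm Hu]]].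
  assert (Inv : forall k : nat, (exists m' r', F ((m',r'),0)) \/
     (exists y be, F (y,be) /\ 0 < be /\ be <= al - Z.of_nat k)).
  { induction k as [|k IH].
    - right; exists x, al; repeat split; auto; lia.
    - destruct IH as [IH|[y [be [Fb [H1 H2]]]]]; [left; auto|].
      assert (Hi := HA _ Fb). unfold inA in Hi.
      assert (Hb : be < p) by lia.
      assert (Fp := Hm _ _ Fb Ha).
      unfold odot in Fp; destruct y as [y1 y2], x as [x1 x2].
      destruct (1 <=? be) eqn:E1; [|zb; lia].
      destruct (1 <=? al) eqn:E2; [|zb; lia]. simpl in Fp.
      destruct (p <? be + al) eqn:E3; zb.
      + right; eexists; exists (be + al - p); split; [exact Fp|]; lia.
      + left; destruct (lex_min _ _) as [u v]; exists u, v; exact Fp. }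
  destruct (Inv (Z.to_nat al)) as [H|[y [be [_ [H1 H2]]]]]; auto. lia.
Qed.

Lemma main F : proper_filter n p F -> forall a, F a -> upset n p ((0,0),p) a.
Proof.
  intros [HF [b [Hb Nb]]] a Fa.
  assert (HA := proj1 HF). assert (Ia := HA _ Fa).
  destruct a as [x al].
  assert (Fbot : ~ F (botA n)).
  { intro Hbot. apply Nb. destruct HF as [_ [_ [_ Hu]]]. apply (Hu _ _ Hbot Hb (bot_le _ Hb)). }
  destruct (Z.eq_dec al p) as [->|Hne].
  - split; auto. unfold inA in Ia; unfold leA; left; split; [lia|split; [lia|]]. tauto.
  - exfalso. destruct x as [m r].
    destruct (Z.eq_dec al 0) as [->|H0].
    + apply Fbot, (alpha0 F HF m r Fa).
    + unfold inA in Ia. destruct (alphamid F HF _ al Fa) as [m' [r' Hf]]; [lia|].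
      apply Fbot, (alpha0 F HF m' r' Hf).
Qed.

Lemma U_proper : proper_filter n p (upset n p ((0,0),p)).
Proof.
  split.
  - split; [intros a [H _]; exact H|].
    split.
    + unfold upset, inA, leA, topA, lex_le; simpl; split; [left; lia|left; lia].
    + split.
      * intros [[m r] al] [[k s] be] [Ia La] [Ib Lb].
        unfold inA, leA, lex_le in Ia, La, Ib, Lb; simpl in *.
        assert (al = p) by lia. assert (be = p) by lia. subst al be.
        unfold odot. destruct (1 <=? p) eqn:E; zb; [|lia]. simpl.
        destruct (p <? p + p) eqn:E2; zb; [|lia].
        unfold lstar, lex_max, psub, padd; simpl.
        destruct (lex_leb (0,0) (m+k-n, r+s-0)) eqn:E3.
        -- apply lex_leb_iff in E3; unfold lex_le in E3; simpl in E3.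
           unfold upset, inA, leA, lex_le; simpl; split; [left|left]; lia.
        -- unfold upset, inA, leA, lex_le; simpl; split; [left|left]; lia.
      * intros [x al] [y be] [Ia La] Ib Lab. split; auto.
        unfold inA, leA, lex_le in *; destruct x, y; simpl in *. left. lia.
  - exists (botA n); split; [apply bot_in|].
    unfold upset, leA, botA; simpl; lia.
Qed.

End S.

Theorem corollary3p3 (n p : Z) (hn : 1 <= n) (hp : 1 <= p) :
  maximal_filter n p (upset n p ((0, 0), p)) /\
  (forall F, maximal_filter n p F ->
     forall a, F a <-> upset n p ((0, 0), p) a) /\
  (forall a, Rad n p a <-> upset n p ((0, 0), p) a).
Proof.
  assert (HU : maximal_filter n p (upset n p ((0, 0), p))).
  { split; [apply U_proper; auto|]. intros G HG _ a Ga. apply (main n p hn hp G HG a Ga). }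
  assert (H2 : forall F, maximal_filter n p F ->
     forall a, F a <-> upset n p ((0, 0), p) a).
  { intros F [HF Hmax] a; split.
    - apply (main n p hn hp F HF).
    - apply Hmax; [apply U_proper; auto|]. apply (main n p hn hp F HF). }
  split; [exact HU|split; [exact H2|]].
  intros a; split.
  - intros [_ H]. apply H, HU.
  - intros Ha. split; [exact (proj1 Ha)|]. intros F HF. apply (H2 F HF), Ha.
Qed.
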